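(* Let $G$ be a topological group and $\rho:G\to U(N)$ a continuous unitary representation. For $V\in PU(N)$ commuting with $\rho(g)$ for all $g$, choose a lift $\tilde V\in U(N)$; then $\rho(g)^\dagger\tilde V\rho(g)=\chi[V](g)\tilde V$ defines a one-dimensional representation $\chi[V]:G\to U(1)$ independent of the lift. The path components of the space of $\rho$-symmetric projective unitaries in $PU(N)$ are in bijection with the values of $\chi[V]$ attained, each attained value having finite order; every element of finite order in $X_G=\mathrm{Hom}(G,U(1))$ (the torsion subgroup $X_G^T$) is attained for a suitable representation $\rho$ (namely $\rho=\bigoplus_{p=0}^{n-1}\chi^p$ if $\chi$ has order $n$). Moreover $\chi[V]$ is stable under $V\mapsto V\otimes\mathbb{1}$ and satisfies $\chi[V\otimes Q]=\chi[V]\chi[Q]$.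
   Context: $X_G$ is the group of continuous homomorphisms $G\to U(1)$ with pointwise multiplication; $X_G^T$ its subgroup of elements of finite order. A projective unitary is $\rho$-symmetric if it commutes with $\rho(g)$ in $PU(N)$ for all $g\in G$. *)

(* Defs.v *)
From HB Require Import structures.
From mathcomp Require Import all_boot all_order all_algebra.
From mathcomp Require Import generic_quotient.
From mathcomp Require Import all_classical all_reals all_analysis.
From mathcomp.real_closed Require Import complex mxtens.

Set Implicit Arguments.
Unset Strict Implicit.
Unset Printing Implicit Defensive.

Import Order.TTheory GRing.Theory Num.Theory.
Import numFieldNormedType.Exports.
Local Open Scope ring_scope.
Local Open Scope classical_set_scope.
Local Open Scope quotient_scope.

Definition topological_group (G : topologicalType)
  (mul : G -> G -> G) (inv : G -> G) (one : G) : Prop :=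
  [/\ (forall x y z, mul x (mul y z) = mul (mul x y) z),
      (forall x, mul one x = x),
      (forall x, mul (inv x) x = one),
      continuous (fun p : G * G => mul p.1 p.2) &
      continuous inv].

Definition reim (R : realType) (z : R[i]) : R * R := (complex.Re z, complex.Im z).

Definition Ctop (R : realType) : Type := R[i].
HB.instance Definition _ (R : realType) := Choice.on (Ctop R).
HB.instance Definition _ (R : realType) :=
  Topological.copy (Ctop R) (initial_topology (@reim R)).

Definition reim_mx (R : realType) (N : nat) (A : 'M[R[i]]_N) :
  'M[R]_N * 'M[R]_N := (map_mx (@complex.Re R) A, map_mx (@complex.Im R) A).

Definition Mtop (R : realType) (N : nat) : Type := 'M[R[i]]_N.
HB.instance Definition _ (R : realType) N := Choice.on (Mtop R N).
HB.instance Definition _ (R : realType) N :=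
  Topological.copy (Mtop R N) (initial_topology (@reim_mx R N)).

Definition adjmx (R : realType) (m n : nat) (A : 'M[R[i]]_(m, n)) : 'M[R[i]]_(n, m) :=
  (map_mx (@conjc R) A)^T.

Definition unitary (R : realType) (N : nat) (A : 'M[R[i]]_N) : Prop :=
  A *m adjmx A = 1%:M.

Definition unitary_set (R : realType) (N : nat) : set (Mtop R N) :=
  [set A | unitary A].

Definition UN (R : realType) (N : nat) : Type := set_type (@unitary_set R N).

Definition Uval (R : realType) (N : nat) (u : UN R N) : 'M[R[i]]_N := set_val u.

Definition phase_rel (R : realType) (N : nat) : rel (UN R N) :=
  fun u v => `[< exists c : R[i], `|c| = 1 /\ Uval u = c *: Uval v >].

Lemma phase_rel_refl R N : reflexive (@phase_rel R N).
Proof. by move=> u; apply/asboolP; exists 1; rewrite normr1 scale1r. Qed.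

Lemma normc1_conj (R : realType) (c : R[i]) : `|c| = 1 -> c * conjc c = 1.
Proof. by move=> h; rewrite -sqr_normc h expr1n. Qed.

Lemma phase_rel_sym R N : symmetric (@phase_rel R N).
Proof.
move=> u v; apply/asboolP/asboolP => -[c [c1 e]]; exists (conjc c);
  (split; first by rewrite normcJ).
- by rewrite e scalerA mulrC normc1_conj // scale1r.
- by rewrite e scalerA mulrC normc1_conj // scale1r.
Qed.

Lemma phase_rel_trans R N : transitive (@phase_rel R N).
Proof.
move=> v u w /asboolP [c [c1 e1]] /asboolP [d [d1 e2]]; apply/asboolP.
by exists (c * d); rewrite normrM c1 d1 mulr1 e1 e2 scalerA.
Qed.

Canonical phase_equiv R N :=
  EquivRel (@phase_rel R N) (@phase_rel_refl R N)
           (@phase_rel_sym R N) (@phase_rel_trans R N).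

Definition PU (R : realType) (N : nat) : Type :=
  quotient_topology {eq_quot (@phase_equiv R N)}.

Definition lift (R : realType) (N : nat) (V : PU R N) : 'M[R[i]]_N :=
  Uval (repr V).

Definition unitary_rep (R : realType) (G : topologicalType) (mul : G -> G -> G)
  (N : nat) (rho : G -> 'M[R[i]]_N) : Prop :=
  [/\ (forall g, unitary (rho g)),
      (forall g h, rho (mul g h) = rho g *m rho h) &
      continuous (rho : G -> Mtop R N)].

Definition in_XG (R : realType) (G : topologicalType) (mul : G -> G -> G)
  (chi : G -> R[i]) : Prop :=
  [/\ (forall g, `|chi g| = 1),
      (forall g h, chi (mul g h) = chi g * chi h) &
      continuous (chi : G -> Ctop R)].

Definition rho_symmetric (R : realType) (G : Type) (N : nat)
  (rho : G -> 'M[R[i]]_N) (V : PU R N) : Prop :=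
  forall g, exists c : R[i], `|c| = 1 /\
    rho g *m lift V = c *: (lift V *m rho g).

Definition chiV (R : realType) (G : Type) (N : nat)
  (rho : G -> 'M[R[i]]_N) (V : PU R N) : G -> R[i] :=
  fun g => xget 0 [set c : R[i] | adjmx (rho g) *m lift V *m rho g = c *: lift V].

Definition sym_path_connected (R : realType) (G : Type) (N : nat)
  (rho : G -> 'M[R[i]]_N) (V W : PU R N) : Prop :=
  exists gamma : R -> PU R N,
    [/\ {within `[0, 1], continuous gamma},
        gamma 0 = V, gamma 1 = W &
        forall t, t \in `[0, 1]%R -> rho_symmetric rho (gamma t)].

Lemma adjmx_tens (R : realType) m n p q (A : 'M[R[i]]_(m, n)) (B : 'M[R[i]]_(p, q)) :
  adjmx (A *t B) = adjmx A *t adjmx B.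
Proof. by rewrite /adjmx map_mxT trmx_tens. Qed.

Lemma unitary_tens (R : realType) N N' (A : 'M[R[i]]_N) (B : 'M[R[i]]_N') :
  unitary A -> unitary B -> unitary (A *t B).
Proof.
rewrite /unitary adjmx_tens => hA hB.
rewrite tensmx_mul hA hB; apply/matrixP => i j.
case: (mxtens_indexP i) => i0 i1; case: (mxtens_indexP j) => j0 j1.
rewrite tensmxE !mxE -natrM mulnb; congr (_%:R); congr nat_of_bool.
by rewrite (inj_eq (can_inj (@mxtens_indexK _ _))) xpair_eqE.
Qed.

Lemma UvalP (R : realType) (N : nat) (u : UN R N) : unitary (Uval u).
Proof. exact: (set_valP u). Qed.

Lemma unitary1 (R : realType) (N : nat) : unitary (1%:M : 'M[R[i]]_N).
Proof.
by rewrite /unitary /adjmx mul1mx map_scalar_mx rmorph1 tr_scalar_mx.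
Qed.

Definition tensU (R : realType) (N N' : nat) (u : UN R N) (v : UN R N') :
  UN R (N * N') :=
  exist _ (Uval u *t Uval v : Mtop R (N * N'))
    (mem_set (unitary_tens (UvalP u) (UvalP v))).

Definition oneU (R : realType) (N : nat) : UN R N :=
  exist _ (1%:M : Mtop R N) (mem_set (@unitary1 R N)).

Definition tensPU (R : realType) (N N' : nat) (V : PU R N) (Q : PU R N') :
  PU R (N * N') := \pi_(PU R (N * N')) (tensU (repr V) (repr Q)).

Definition onePU (R : realType) (N : nat) : PU R N := \pi_(PU R N) (oneU R N).

Definition tens_rep (R : realType) (G : Type) (N N' : nat)
  (rho : G -> 'M[R[i]]_N) (rho' : G -> 'M[R[i]]_N') : G -> 'M[R[i]]_(N * N') :=
  fun g => rho g *t rho' g.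

Definition sum_powers_rep (R : realType) (G : Type) (chi : G -> R[i]) (n : nat) :
  G -> 'M[R[i]]_n :=
  fun g => diag_mx (\row_(p < n) chi g ^+ p).

Definition has_order (R : realType) (G : Type) (chi : G -> R[i]) (n : nat) : Prop :=
  [/\ (0 < n)%N,
      (forall g, chi g ^+ n = 1) &
      (forall m, (0 < m < n)%N -> exists g, chi g ^+ m != 1)].

(* Main.v *)
Require Import Defs.
From HB Require Import structures.
From mathcomp Require Import all_boot all_order all_algebra.
From mathcomp Require Import generic_quotient.
From mathcomp Require Import all_classical all_reals all_analysis.
From mathcomp.real_closed Require Import complex mxtens.
From mathcomp Require Import fingroup perm.
From mathcomp Require Import lra.

Import Order.TTheory GRing.Theory Num.Theory.
Import numFieldNormedType.Exports.
Local Open Scope ring_scope.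
Local Open Scope classical_set_scope.
Local Open Scope quotient_scope.
Local Notation lift := Defs.lift.

Set Implicit Arguments.
Unset Strict Implicit.
Unset Printing Implicit Defensive.

Section Cplx.
Variable R : realType.

Lemma cReD (a b : R[i]) : complex.Re (a + b) = complex.Re a + complex.Re b.
Proof. by case: a; case: b. Qed.
Lemma cImD (a b : R[i]) : complex.Im (a + b) = complex.Im a + complex.Im b.
Proof. by case: a; case: b. Qed.
Lemma cReN (a : R[i]) : complex.Re (- a) = - complex.Re a.
Proof. by case: a. Qed.
Lemma cImN (a : R[i]) : complex.Im (- a) = - complex.Im a.
Proof. by case: a. Qed.
Lemma cReM (a b : R[i]) : complex.Re (a * b) =
  complex.Re a * complex.Re b - complex.Im a * complex.Im b.
Proof. by case: a; case: b. Qed.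
Lemma cImM (a b : R[i]) : complex.Im (a * b) =
  complex.Re a * complex.Im b + complex.Im a * complex.Re b.
Proof. by case: a; case: b. Qed.
Lemma cReJ (a : R[i]) : complex.Re (conjc a) = complex.Re a.
Proof. by case: a. Qed.
Lemma cImJ (a : R[i]) : complex.Im (conjc a) = - complex.Im a.
Proof. by case: a. Qed.
Lemma cReV (a : R[i]) : complex.Re (a^-1) =
  complex.Re a / (complex.Re a ^+ 2 + complex.Im a ^+ 2).
Proof. by case: a. Qed.
Lemma cImV (a : R[i]) : complex.Im (a^-1) =
  - (complex.Im a / (complex.Re a ^+ 2 + complex.Im a ^+ 2)).
Proof. by case: a. Qed.

Definition ccont (T : topologicalType) (f : T -> R[i]) :=
  continuous (fun x => complex.Re (f x)) /\ continuous (fun x => complex.Im (f x)).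

Section cc.
Variable T : topologicalType.
Implicit Types f g : T -> R[i].

Lemma rcontD (f g : T -> R) : continuous f -> continuous g ->
  continuous (fun x => f x + g x).
Proof. by move=> cf cg x; exact: (continuousD (cf x) (cg x)). Qed.
Lemma rcontN (f : T -> R) : continuous f -> continuous (fun x => - f x).
Proof. by move=> cf x; exact: (continuousN (cf x)). Qed.
Lemma rcontM (f g : T -> R) : continuous f -> continuous g ->
  continuous (fun x => f x * g x).
Proof. by move=> cf cg x; exact: (continuousM (cf x) (cg x)). Qed.
Lemma rcontC (c : R) : continuous (fun _ : T => c).
Proof. by move=> x; apply: cvg_cst. Qed.
Lemma rcontV (f : T -> R) : (forall x, f x != 0) -> continuous f ->
  continuous (fun x => (f x)^-1).
Proof. by move=> nz cf x; exact: (continuousV (nz x) (cf x)). Qed.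

Lemma rcont_ext (f g : T -> R) : (forall x, f x = g x) -> continuous g -> continuous f.
Proof. by move=> e; have -> : f = g by apply: funext. Qed.
Lemma ccont_ext (f g : T -> R[i]) : (forall x, f x = g x) -> ccont g -> ccont f.
Proof. by move=> e; have -> : f = g by apply: funext. Qed.

Lemma ccontC c : ccont (fun _ : T => c).
Proof. by split; apply: rcontC. Qed.
Lemma ccontD f g : ccont f -> ccont g -> ccont (fun x => f x + g x).
Proof.
move=> [f1 f2] [g1 g2]; split.
  by apply: rcont_ext; [move=> ?; rewrite cReD; reflexivity|]; apply: rcontD.
by apply: rcont_ext; [move=> ?; rewrite cImD; reflexivity|]; apply: rcontD.
Qed.
Lemma ccontN f : ccont f -> ccont (fun x => - f x).
Proof.
move=> [f1 f2]; split.
  by apply: rcont_ext; [move=> ?; rewrite cReN; reflexivity|]; apply: rcontN.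
by apply: rcont_ext; [move=> ?; rewrite cImN; reflexivity|]; apply: rcontN.
Qed.
Lemma ccontB f g : ccont f -> ccont g -> ccont (fun x => f x - g x).
Proof. by move=> cf cg; apply: ccontD => //; apply: ccontN. Qed.
Lemma ccontM f g : ccont f -> ccont g -> ccont (fun x => f x * g x).
Proof.
move=> [f1 f2] [g1 g2]; split.
  apply: rcont_ext; [move=> ?; rewrite cReM; reflexivity|].
  by apply: rcontD; [apply: rcontM|apply: rcontN; apply: rcontM].
by apply: rcont_ext; [move=> ?; rewrite cImM; reflexivity|]; apply: rcontD; apply: rcontM.
Qed.
Lemma ccontJ f : ccont f -> ccont (fun x => conjc (f x)).
Proof.
move=> [f1 f2]; split.
  by apply: rcont_ext; [move=> ?; rewrite cReJ; reflexivity|].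
by apply: rcont_ext; [move=> ?; rewrite cImJ; reflexivity|]; apply: rcontN.
Qed.
Lemma ccontV f : (forall x, f x != 0) -> ccont f -> ccont (fun x => (f x)^-1).
Proof.
move=> nz [f1 f2].
have cd : continuous (fun x => complex.Re (f x) ^+ 2 + complex.Im (f x) ^+ 2).
  by apply: rcontD; rewrite /GRing.exp /=; apply: rcontM.
have dnz x : complex.Re (f x) ^+ 2 + complex.Im (f x) ^+ 2 != 0.
  have := nz x; case: (f x) => a b /=; apply: contra => /eqP h.
  have ha : a = 0.
    apply/eqP; rewrite -sqrf_eq0; apply/eqP/le_anti.
    by rewrite sqr_ge0 -h lerDl sqr_ge0.
  have hb : b = 0.
    apply/eqP; rewrite -sqrf_eq0; apply/eqP/le_anti.
    by rewrite sqr_ge0 -h lerDr sqr_ge0.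
  by rewrite ha hb.
have cv := rcontV dnz cd.
split.
  by apply: rcont_ext; [move=> ?; rewrite cReV; reflexivity|]; apply: rcontM.
by apply: rcont_ext; [move=> ?; rewrite cImV; reflexivity|]; apply: rcontN; apply: rcontM.
Qed.
Lemma ccont_real (h : T -> R) : continuous h -> ccont (fun x => ((h x)%:C)%C).
Proof. by move=> ch; split => //=; apply: rcontC. Qed.

Lemma ccont_sum (I : Type) (r : seq I) (P : pred I) (F : I -> T -> R[i]) :
  (forall i, ccont (F i)) -> ccont (fun x => \sum_(i <- r | P i) F i x).
Proof.
move=> cF; elim: r => [|a r IH].
  by apply: ccont_ext; [move=> ?; rewrite big_nil; reflexivity|]; apply: ccontC.
apply: ccont_ext; [move=> ?; rewrite big_cons; reflexivity|].
case: (P a) => //; exact: ccontD.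
Qed.
Lemma ccont_prod (I : Type) (r : seq I) (P : pred I) (F : I -> T -> R[i]) :
  (forall i, ccont (F i)) -> ccont (fun x => \prod_(i <- r | P i) F i x).
Proof.
move=> cF; elim: r => [|a r IH].
  by apply: ccont_ext; [move=> ?; rewrite big_nil; reflexivity|]; apply: ccontC.
apply: ccont_ext; [move=> ?; rewrite big_cons; reflexivity|].
case: (P a) => //; exact: ccontM.
Qed.
Lemma ccontX f n : ccont f -> ccont (fun x => f x ^+ n).
Proof.
move=> cf; elim: n => [|n IH]; first by apply: ccont_ext; [move=> ?; rewrite expr0; reflexivity|]; apply: ccontC.
by apply: ccont_ext; [move=> ?; rewrite exprS; reflexivity|]; apply: ccontM.
Qed.
End cc.
End Cplx.

Section Mx.
Variable R : realType.
Variable T : topologicalType.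

Definition mcont m n (F : T -> 'M[R[i]]_(m, n)) := forall i j, ccont (fun x => F x i j).

Lemma mx_cont m n (F : T -> 'M[R]_(m, n)) :
  (forall i j, continuous (fun x => F x i j)) -> continuous F.
Proof.
move=> cF x; apply/cvg_mx_entourageP => A entA.
apply: (@filter_forall _ _ (fun i (N : 'M[R]_(m, n)) => forall j, (F x i j, N i j) \in A)) => i.
apply: filter_forall => j.
have /cvg_entourageP /(_ A entA) := cF i j x.
by move=> h; apply: (@filterS _ (nbhs x) _ _ _ _ h) => y /=; rewrite in_setE.
Qed.

Lemma pair_cont (U V : topologicalType) (f : T -> U) (g : T -> V) :
  continuous f -> continuous g -> continuous (fun x => (f x, g x)).
Proof. by move=> cf cg x; apply: cvg_pair; [apply: cf|apply: cg]. Qed.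

Lemma fst_cont (U V : topologicalType) : continuous (@fst U V).
Proof. by move=> [a b]; exact: cvg_fst. Qed.
Lemma snd_cont (U V : topologicalType) : continuous (@snd U V).
Proof. by move=> [a b]; exact: cvg_snd. Qed.

Lemma Mtop_cont N (F : T -> Mtop R N) : mcont F -> continuous F.
Proof.
move=> cF; apply: continuous_comp_initial.
rewrite /comp /reim_mx; apply: pair_cont; apply: mx_cont => i j;
  case: (cF i j) => c1 c2.
  by apply: (rcont_ext (g := fun x => complex.Re (F x i j))) => // x; rewrite mxE.
by apply: (rcont_ext (g := fun x => complex.Im (F x i j))) => // x; rewrite mxE.
Qed.

Lemma Mtop_cont_inv N (F : T -> Mtop R N) : continuous F -> mcont F.
Proof.
move=> cF i j; split.
- have h : continuous (fun x => ((reim_mx (F x)).1 i j)).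
    move=> x; apply: (@continuous_comp _ _ _ (fun x => (reim_mx (F x)).1) (fun M : 'M[R]_N => M i j)); last exact: coord_continuous.
    apply: (@continuous_comp _ _ _ (fun x => (reim_mx (F x))) fst); last exact: fst_cont.
    apply: (@continuous_comp _ _ _ F (@reim_mx R N)); first exact: cF.
    exact: initial_continuous.
  by apply: rcont_ext h => x; rewrite /reim_mx /= mxE.
- have h : continuous (fun x => ((reim_mx (F x)).2 i j)).
    move=> x; apply: (@continuous_comp _ _ _ (fun x => (reim_mx (F x)).2) (fun M : 'M[R]_N => M i j)); last exact: coord_continuous.
    apply: (@continuous_comp _ _ _ (fun x => (reim_mx (F x))) snd); last exact: snd_cont.
    apply: (@continuous_comp _ _ _ F (@reim_mx R N)); first exact: cF.
    exact: initial_continuous.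
  by apply: rcont_ext h => x; rewrite /reim_mx /= mxE.
Qed.

Lemma Ctop_cont (f : T -> Ctop R) : ccont f -> continuous f.
Proof.
move=> [c1 c2]; apply: continuous_comp_initial.
by rewrite /comp /reim; apply: pair_cont.
Qed.

Lemma Ctop_cont_inv (f : T -> Ctop R) : continuous f -> ccont f.
Proof.
move=> cf; split => x.
- apply: (@continuous_comp _ _ _ (fun x => reim (f x)) fst); last exact: fst_cont.
  apply: (@continuous_comp _ _ _ f (@reim R)); first exact: cf.
  exact: initial_continuous.
- apply: (@continuous_comp _ _ _ (fun x => reim (f x)) snd); last exact: snd_cont.
  apply: (@continuous_comp _ _ _ f (@reim R)); first exact: cf.
  exact: initial_continuous.
Qed.

End Mx.

Section Alg.
Variable R : realType.
Local Notation C := (R[i]).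

Lemma adjmxE m n (A : 'M[C]_(m, n)) i j : adjmx A i j = conjc (A j i).
Proof. by rewrite /adjmx !mxE. Qed.

Lemma adjmxM m n p (A : 'M[C]_(m, n)) (B : 'M[C]_(n, p)) :
  adjmx (A *m B) = adjmx B *m adjmx A.
Proof. by rewrite /adjmx map_mxM trmx_mul. Qed.

Lemma adjmxK m n (A : 'M[C]_(m, n)) : adjmx (adjmx A) = A.
Proof. by apply/matrixP => i j; rewrite /adjmx !mxE conjcK. Qed.

Lemma adjmx1 n : adjmx (1%:M : 'M[C]_n) = 1%:M.
Proof. by rewrite /adjmx map_scalar_mx rmorph1 tr_scalar_mx. Qed.

Lemma adjmxZ m n c (A : 'M[C]_(m, n)) : adjmx (c *: A) = conjc c *: adjmx A.
Proof. by apply/matrixP => i j; rewrite /adjmx !mxE rmorphM. Qed.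

Lemma adjmxD m n (A B : 'M[C]_(m, n)) : adjmx (A + B) = adjmx A + adjmx B.
Proof. by apply/matrixP => i j; rewrite /adjmx !mxE rmorphD. Qed.

Lemma adjmxN m n (A : 'M[C]_(m, n)) : adjmx (- A) = - adjmx A.
Proof. by apply/matrixP => i j; rewrite /adjmx !mxE rmorphN. Qed.

Lemma unitaryV n (A : 'M[C]_n) : unitary A -> adjmx A *m A = 1%:M.
Proof. exact: mulmx1C. Qed.

Lemma unitaryM n (A B : 'M[C]_n) : unitary A -> unitary B -> unitary (A *m B).
Proof.
rewrite /unitary => hA hB; rewrite adjmxM mulmxA -(mulmxA A) hB mulmx1.
exact: hA.
Qed.

Lemma unitc_conj (c : C) : `|c| = 1 -> conjc c * c = 1.
Proof. by move=> h; rewrite mulrC normc1_conj. Qed.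

Lemma conj_unitc (c : C) : c * conjc c = 1 -> `|c| = 1.
Proof.
move=> h; have : `|c| ^+ 2 = 1 by rewrite sqr_normc h.
move/eqP; rewrite sqrf_eq1 => /orP [/eqP //|/eqP h1].
by have := normr_ge0 c; rewrite h1 ler0N1.
Qed.

Lemma unitaryZ n c (A : 'M[C]_n) : `|c| = 1 -> unitary A -> unitary (c *: A).
Proof.
rewrite /unitary => hc hA; rewrite adjmxZ -scalemxAl -scalemxAr scalerA.
by rewrite normc1_conj // scale1r.
Qed.

Lemma unitary_neq0 n (A : 'M[C]_n) : (0 < n)%N -> unitary A -> A != 0.
Proof.
move=> hn hA; apply/eqP => A0; move: hA; rewrite /unitary A0 mul0mx => /matrixP.
move=> /(_ (Ordinal hn) (Ordinal hn)); rewrite !mxE eqxx /= => /eqP.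
by rewrite eq_sym oner_eq0.
Qed.

Lemma scale_inj m n (A : 'M[C]_(m, n)) c d : A != 0 -> c *: A = d *: A -> c = d.
Proof.
move=> nz e; have [i [j Aij]] : exists i j, A i j != 0.
  move: nz; apply: contraNP => h; apply/eqP/matrixP => i j; rewrite mxE.
  by case: (eqVneq (A i j) 0) => // hij; exfalso; apply: h; exists i, j.
have := congr1 (fun M : 'M[C]_(m, n) => M i j) e; rewrite !mxE => /eqP.
by rewrite -subr_eq0 -mulrBl mulf_eq0 (negPf Aij) orbF subr_eq0 => /eqP.
Qed.
End Alg.

Section Lift.
Variable R : realType.
Local Notation C := (R[i]).

Lemma lift_unitary N (V : PU R N) : unitary (lift V).
Proof. exact: UvalP. Qed.

Lemma pi_phase N (u v : UN R N) : \pi_(PU R N) u = \pi_(PU R N) v ->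
  exists c : C, `|c| = 1 /\ Uval u = c *: Uval v.
Proof.
move=> h; have : phase_rel u v by apply/(eqmodP (phase_equiv R N)); exact: h.
by move/asboolP.
Qed.

Lemma phase_pi N (u v : UN R N) : (exists c : C, `|c| = 1 /\ Uval u = c *: Uval v) ->
  \pi_(PU R N) u = \pi_(PU R N) v.
Proof. by move=> h; apply/(eqmodP (phase_equiv R N)); apply/asboolP. Qed.

Lemma lift_pi N (u : UN R N) : exists c : C, `|c| = 1 /\ lift (\pi_(PU R N) u) = c *: Uval u.
Proof. by apply: pi_phase; rewrite reprK. Qed.

Variable G : Type.
Variable N : nat.
Hypothesis hN : (0 < N)%N.
Variable rho : G -> 'M[C]_N.
Hypothesis rhoU : forall g, unitary (rho g).

Lemma chiV_eq (V : PU R N) g d :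
  adjmx (rho g) *m lift V *m rho g = d *: lift V -> chiV rho V g = d.
Proof.
move=> h; rewrite /chiV.
set P := [set c : C | adjmx (rho g) *m lift V *m rho g = c *: lift V].
have : P (xget 0 P) by apply: xgetPex; exists d.
rewrite /P /= h => /esym e.
exact: scale_inj (unitary_neq0 hN (lift_unitary V)) e.
Qed.

Lemma sym_conj (L : 'M[C]_N) g c : `|c| = 1 ->
  rho g *m L = c *: (L *m rho g) ->
  adjmx (rho g) *m L *m rho g = conjc c *: L.
Proof.
move=> hc h.
have e1 : adjmx (rho g) *m (rho g *m L) = L by rewrite mulmxA unitaryV // mul1mx.
rewrite h -scalemxAr mulmxA in e1.
by rewrite -{2}e1 scalerA unitc_conj // scale1r.
Qed.

Lemma chiV_spec (V : PU R N) g : rho_symmetric rho V ->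
  adjmx (rho g) *m lift V *m rho g = chiV rho V g *: lift V /\ `|chiV rho V g| = 1.
Proof.
move=> /(_ g) [c [hc h]]; have e := sym_conj hc h.
by rewrite (chiV_eq e) normcJ.
Qed.

Lemma chiV_rep (V : PU R N) (W : UN R N) g : rho_symmetric rho V ->
  \pi_(PU R N) W = V ->
  adjmx (rho g) *m Uval W *m rho g = chiV rho V g *: Uval W.
Proof.
move=> sV eW; have [c [hc e]] := lift_pi W; rewrite eW in e.
have eW' : Uval W = conjc c *: lift V by rewrite e scalerA unitc_conj // scale1r.
have [h _] := chiV_spec g sV.
by rewrite eW' -scalemxAr -scalemxAl h !scalerA mulrC.
Qed.

Lemma chiV_sym_conv (V : PU R N) g d :
  adjmx (rho g) *m lift V *m rho g = d *: lift V -> `|d| = 1 ->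
  rho g *m lift V = conjc d *: (lift V *m rho g).
Proof.
move=> h hd.
have : rho g *m (adjmx (rho g) *m lift V *m rho g) = rho g *m (d *: lift V) by rewrite h.
rewrite !mulmxA rhoU mul1mx -scalemxAr => e.
by rewrite e scalerA unitc_conj // scale1r.
Qed.

Lemma det_adjmx (A : 'M[C]_N) : \det (adjmx A) = conjc (\det A).
Proof. by rewrite /adjmx det_tr det_map_mx. Qed.

Lemma chiV_order (V : PU R N) : rho_symmetric rho V -> forall g, chiV rho V g ^+ N = 1.
Proof.
move=> sV g; have [h _] := chiV_spec g sV.
have := congr1 determinant h; rewrite detZ !det_mulmx det_adjmx.
have u := rhoU g; have := congr1 determinant u.
rewrite det_mulmx det_adjmx det1 => e2.
have dL : \det (lift V) != 0.
  have := congr1 determinant (lift_unitary V).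
  rewrite det_mulmx det1; apply: contra_eq_neq => ->; rewrite mul0r.
  by rewrite eq_sym oner_neq0.
rewrite mulrAC [_^*%C * _]mulrC e2 mul1r => /eqP.
by rewrite -{1}(mul1r (\det (lift V))) (inj_eq (mulIf dL)) eq_sym => /eqP.
Qed.

End Lift.

Section McontLemmas.
Variable R : realType.
Variable T : topologicalType.
Local Notation C := (R[i]).

Lemma mcont_ext m n (F G : T -> 'M[C]_(m, n)) : (forall x, F x = G x) -> mcont G -> mcont F.
Proof. by move=> e; have -> : F = G by apply: funext. Qed.

Lemma mcontC m n (A : 'M[C]_(m, n)) : mcont (fun _ : T => A).
Proof. by move=> i j; apply: ccontC. Qed.

Lemma mcontM m n p (F : T -> 'M[C]_(m, n)) (G : T -> 'M[C]_(n, p)) :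
  mcont F -> mcont G -> mcont (fun x => F x *m G x).
Proof.
move=> cF cG i j; apply: ccont_ext; first by move=> x; rewrite mxE; reflexivity.
by apply: ccont_sum => k; apply: ccontM.
Qed.

Lemma mcontD m n (F G : T -> 'M[C]_(m, n)) :
  mcont F -> mcont G -> mcont (fun x => F x + G x).
Proof.
move=> cF cG i j; apply: ccont_ext; first by move=> x; rewrite mxE; reflexivity.
exact: ccontD.
Qed.

Lemma mcontN m n (F : T -> 'M[C]_(m, n)) : mcont F -> mcont (fun x => - F x).
Proof.
move=> cF i j; apply: ccont_ext; first by move=> x; rewrite mxE; reflexivity.
exact: ccontN.
Qed.

Lemma mcontZ m n (c : T -> C) (F : T -> 'M[C]_(m, n)) :
  ccont c -> mcont F -> mcont (fun x => c x *: F x).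
Proof.
move=> cc cF i j; apply: ccont_ext; first by move=> x; rewrite mxE; reflexivity.
exact: ccontM.
Qed.

Lemma mcont_adj m n (F : T -> 'M[C]_(m, n)) : mcont F -> mcont (fun x => adjmx (F x)).
Proof.
move=> cF i j; apply: ccont_ext; first by move=> x; rewrite adjmxE; reflexivity.
exact: ccontJ.
Qed.

Lemma ccont_tr n (F : T -> 'M[C]_n) : mcont F -> ccont (fun x => \tr (F x)).
Proof. by move=> cF; rewrite /mxtrace; apply: ccont_sum. Qed.

Lemma ccont_det n (F : T -> 'M[C]_n) : mcont F -> ccont (fun x => \det (F x)).
Proof.
move=> cF; rewrite /determinant; apply: ccont_sum => s.
apply: ccontM; first exact: ccontC.
by apply: ccont_prod => i.
Qed.

Lemma mcont_row' n (F : T -> 'M[C]_n.+1) i j : mcont F ->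
  mcont (fun x => row' i (col' j (F x))).
Proof.
move=> cF k l; apply: ccont_ext; first by move=> x; rewrite !mxE; reflexivity.
exact: cF.
Qed.

Lemma mcont_adjugate n (F : T -> 'M[C]_n) : mcont F -> mcont (fun x => \adj (F x)).
Proof.
case: n F => [|n] F cF i j; first by case: i.
apply: ccont_ext; first by move=> x; rewrite /adjugate mxE /cofactor; reflexivity.
apply: ccontM; first exact: ccontC.
by apply: ccont_det; apply: mcont_row'.
Qed.

Lemma mcont_inv n (F : T -> 'M[C]_n) : (forall x, \det (F x) != 0) ->
  mcont F -> mcont (fun x => invmx (F x)).
Proof.
move=> nz cF; apply: mcont_ext.
  by move=> x; rewrite /invmx unitmxE unitfE nz; reflexivity.
apply: mcontZ; last exact: mcont_adjugate.
by apply: ccontV => //; apply: ccont_det.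
Qed.

End McontLemmas.

Section Part1.
Variable R : realType.
Local Notation C := (R[i]).
Variable G : topologicalType.
Variable mul : G -> G -> G.

Lemma part_i N (rho : G -> 'M[C]_N) : (0 < N)%N -> unitary_rep mul rho ->
  forall V : PU R N, rho_symmetric rho V ->
    in_XG mul (chiV rho V) /\
    (forall W : UN R N, \pi_(PU R N) W = V ->
       forall g, adjmx (rho g) *m Uval W *m rho g = chiV rho V g *: Uval W).
Proof.
move=> hN [rU rM rC] V sV; split; last first.
  by move=> W eW g; apply: chiV_rep.
split.
- by move=> g; case: (chiV_spec hN rU g sV).
- move=> g h; apply: chiV_eq => //.
  rewrite rM adjmxM.
  have -> : adjmx (rho h) *m adjmx (rho g) *m lift V *m (rho g *m rho h) =
    adjmx (rho h) *m (adjmx (rho g) *m lift V *m rho g) *m rho h by rewrite !mulmxA.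
  rewrite (chiV_spec hN rU g sV).1 -scalemxAr -scalemxAl.
  by rewrite (chiV_spec hN rU h sV).1 scalerA mulrC.
- apply: Ctop_cont.
  have Nz : (N%:R : C) != 0 by rewrite pnatr_eq0 -lt0n.
  apply: (@ccont_ext _ _ _ (fun g => (N%:R)^-1 * \tr (adjmx (lift V) *m
      (adjmx (rho g) *m lift V *m rho g)))).
    move=> g; rewrite (chiV_spec hN rU g sV).1 -scalemxAr unitaryV; last exact: lift_unitary.
    by rewrite mxtraceZ mxtrace1 mulrC mulfK.
  apply: ccontM; first exact: ccontC.
  apply: ccont_tr; apply: mcontM; first exact: mcontC.
  have cr := Mtop_cont_inv rC.
  by apply: mcontM => //; apply: mcontM => //; [apply: mcont_adj|apply: mcontC].
Qed.
End Part1.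

Section Part4.
Variable R : realType.
Local Notation C := (R[i]).
Variable G : topologicalType.
Variable mul : G -> G -> G.

Lemma adj_diag n (e : 'rV[C]_n) : adjmx (diag_mx e) = diag_mx (map_mx conjc e).
Proof.
apply/matrixP => i j; rewrite adjmxE !mxE eq_sym.
by case: eqVneq => [->|_]; rewrite ?mulr1n ?mulr0n ?rmorph0.
Qed.

Lemma unit_pow (c : C) p : `|c| = 1 -> `|c ^+ p| = 1.
Proof. by move=> h; rewrite normrX h expr1n. Qed.

Lemma lift_eq_scale N (u : UN R N) (A B : 'M[C]_N) d :
  A *m Uval u *m B = d *: Uval u ->
  A *m lift (\pi_(PU R N) u) *m B = d *: lift (\pi_(PU R N) u).
Proof.
move=> h; have [c [_ ->]] := lift_pi u.
by rewrite -scalemxAr -scalemxAl h !scalerA mulrC.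
Qed.

Lemma part_iv (chi : G -> C) (n : nat) : in_XG mul chi -> has_order chi n ->
    unitary_rep mul (sum_powers_rep chi n) /\
    exists V : PU R n, rho_symmetric (sum_powers_rep chi n) V /\
                       chiV (sum_powers_rep chi n) V = chi.
Proof.
move=> [chi1 chiM chiC] [hn hord _].
have rU : forall g, unitary (sum_powers_rep chi n g).
  move=> g; rewrite /unitary /sum_powers_rep adj_diag mul_diag_mx.
  apply/matrixP => i j; rewrite !mxE.
  case: eqVneq => [->|ne]; last by rewrite mulr0n mulr0.
  by rewrite !mulr1n normc1_conj // unit_pow.
split; first split => //.
- move=> g h; rewrite /sum_powers_rep mul_diag_mx; apply/matrixP => i j.
  by rewrite !mxE chiM exprMn mulrnAr.
- apply: Mtop_cont => i j; rewrite /sum_powers_rep.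
  apply: ccont_ext; first by move=> g; rewrite !mxE; reflexivity.
  case: (i == j); rewrite ?mulr1n ?mulr0n; last exact: ccontC.
  by apply: ccontX; apply: Ctop_cont_inv.
set s : 'S_n := perm (@ordS_inj n).
have Pu : unitary (perm_mx s : 'M[C]_n).
  rewrite /unitary; have -> : adjmx (perm_mx s : 'M[C]_n) = perm_mx s^-1.
    rewrite -tr_perm_mx /adjmx; congr trmx; apply/matrixP => i j.
    by rewrite !mxE rmorph_nat.
  by rewrite -perm_mxM mulgV perm_mx1.
pose u : UN R n := exist _ (perm_mx s : Mtop R n) (mem_set Pu).
have key : forall g, adjmx (sum_powers_rep chi n g) *m Uval u *m sum_powers_rep chi n g
    = chi g *: Uval u.
  move=> g; rewrite /sum_powers_rep adj_diag mul_diag_mx mul_mx_diag /=.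
  apply/matrixP => i j; rewrite !mxE permE.
  case: eqVneq => [<-|ne]; last by rewrite mulr0 mul0r mulr0.
  have -> : (ordS i : nat) = (i.+1 %% n)%N by [].
  rewrite !mulr1 (expr_mod _ (hord g)) exprSr mulrA.
  by rewrite unitc_conj ?unit_pow // mul1r.
exists (\pi_(PU R n) u).
have key' := fun g => lift_eq_scale (key g).
split; last first.
  by apply: funext => g; apply: chiV_eq => //; apply: key'.
move=> g; exists (conjc (chi g)); rewrite normcJ chi1; split => //.
by apply: chiV_sym_conv => //; apply: key'.
Qed.
End Part4.

Section Part5.
Variable R : realType.
Local Notation C := (R[i]).
Variable G : topologicalType.
Variable mul : G -> G -> G.

Lemma tensZl m n p q c (A : 'M[C]_(m, n)) (B : 'M[C]_(p, q)) :
  (c *: A) *t B = c *: (A *t B).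
Proof.
apply/matrixP => i j.
case: (mxtens_indexP i) => i0 i1; case: (mxtens_indexP j) => j0 j1.
by rewrite tensmxE [in RHS]mxE tensmxE mxE mulrA.
Qed.

Lemma tensZr m n p q c (A : 'M[C]_(m, n)) (B : 'M[C]_(p, q)) :
  A *t (c *: B) = c *: (A *t B).
Proof.
apply/matrixP => i j.
case: (mxtens_indexP i) => i0 i1; case: (mxtens_indexP j) => j0 j1.
by rewrite tensmxE [in RHS]mxE tensmxE mxE mulrCA.
Qed.

Lemma part_v N N' (rho : G -> 'M[C]_N) (rho' : G -> 'M[C]_N') :
    (0 < N)%N -> (0 < N')%N -> unitary_rep mul rho -> unitary_rep mul rho' ->
    forall (V : PU R N) (Q : PU R N'),
      rho_symmetric rho V -> rho_symmetric rho' Q ->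
      rho_symmetric (tens_rep rho rho') (tensPU V Q) /\
      chiV (tens_rep rho rho') (tensPU V Q) = (fun g => chiV rho V g * chiV rho' Q g).
Proof.
move=> hN hN' [rU _ _] [rU' _ _] V Q sV sQ.
have hNN : (0 < N * N')%N by rewrite muln_gt0 hN hN'.
have tU : forall g, unitary (tens_rep rho rho' g).
  by move=> g; apply: unitary_tens.
have key : forall g, adjmx (tens_rep rho rho' g) *m lift (tensPU V Q) *m tens_rep rho rho' g
   = (chiV rho V g * chiV rho' Q g) *: lift (tensPU V Q).
  move=> g; rewrite /tensPU; apply: lift_eq_scale.
  rewrite /tens_rep /= adjmx_tens !tensmx_mul.
  rewrite (chiV_spec hN rU g sV).1 (chiV_spec hN' rU' g sQ).1.
  by rewrite tensZl tensZr scalerA mulrC.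
have ch : chiV (tens_rep rho rho') (tensPU V Q) = (fun g => chiV rho V g * chiV rho' Q g).
  by apply: funext => g; apply: chiV_eq => //; apply: key.
split => // g.
have hd : `|chiV rho V g * chiV rho' Q g| = 1.
  by rewrite normrM (chiV_spec hN rU g sV).2 (chiV_spec hN' rU' g sQ).2 mulr1.
exists (conjc (chiV rho V g * chiV rho' Q g)); rewrite normcJ; split => //.
by apply: chiV_sym_conv => //; apply: key.
Qed.

Lemma one_sym N' (rho' : G -> 'M[C]_N') : (0 < N')%N -> unitary_rep mul rho' ->
  rho_symmetric rho' (onePU R N') /\ chiV rho' (onePU R N') = (fun _ => 1).
Proof.
move=> hN' [rU' _ _].
have key : forall g, adjmx (rho' g) *m lift (onePU R N') *m rho' g = 1 *: lift (onePU R N').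
  move=> g; rewrite /onePU; apply: lift_eq_scale.
  by rewrite /= mulmx1 unitaryV // scale1r.
split; last by apply: funext => g; apply: chiV_eq => //; apply: key.
move=> g; exists 1; rewrite normr1; split => //.
have h := chiV_sym_conv rU' (key g); rewrite conjc1 in h.
by apply: h; exact: normr1.
Qed.

Lemma part_vi N N' (rho : G -> 'M[C]_N) (rho' : G -> 'M[C]_N') :
    (0 < N)%N -> (0 < N')%N -> unitary_rep mul rho -> unitary_rep mul rho' ->
    forall V : PU R N, rho_symmetric rho V ->
      rho_symmetric (tens_rep rho rho') (tensPU V (onePU R N')) /\
      chiV (tens_rep rho rho') (tensPU V (onePU R N')) = chiV rho V.
Proof.
move=> hN hN' r r' V sV.
have [s1 c1] := one_sym hN' r'.
have [sT cT] := part_v hN hN' r r' sV s1.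
split => //; rewrite cT c1; apply: funext => g; exact: mulr1.
Qed.
End Part5.

Section Cayley.
Variable R : realType.
Local Notation C := (R[i]).
Variable N : nat.
Implicit Types A B M X W : 'M[C]_N.
Local Notation I := (1%:M : 'M[C]_N).

Lemma comm_inv M X : M \in unitmx -> X *m M = M *m X ->
  invmx M *m X = X *m invmx M.
Proof.
move=> uM e.
have -> : invmx M *m X = invmx M *m (X *m M) *m invmx M by rewrite -!mulmxA mulmxV // mulmx1.
by rewrite e mulmxA mulVmx // mul1mx.
Qed.

Lemma inv_uniq X M : M \in unitmx -> X *m M = I -> X = invmx M.
Proof. by move=> uM e; rewrite -[X]mulmx1 -(mulmxV uM) mulmxA e mul1mx. Qed.

Lemma unit_adj M : M \in unitmx -> adjmx M \in unitmx.
Proof. by rewrite !unitmxE !unitfE det_adjmx conjc_eq0. Qed.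

Lemma adj_inv M : M \in unitmx -> adjmx (invmx M) = invmx (adjmx M).
Proof.
move=> uM; apply: inv_uniq; first exact: unit_adj.
by rewrite -adjmxM mulmxV // adjmx1.
Qed.

Lemma comm_add X A B : X *m A = A *m X -> X *m B = B *m X -> X *m (A + B) = (A + B) *m X.
Proof. by move=> a b; rewrite mulmxDr mulmxDl a b. Qed.
Lemma comm_opp X A : X *m A = A *m X -> X *m (- A) = (- A) *m X.
Proof. by move=> a; rewrite mulmxN mulNmx a. Qed.
Lemma comm_scale X A c : X *m A = A *m X -> X *m (c *: A) = (c *: A) *m X.
Proof. by move=> a; rewrite -scalemxAr -scalemxAl a. Qed.
Lemma comm_one X : X *m I = I *m X.
Proof. by rewrite mulmx1 mul1mx. Qed.
Lemma comm_mul X A B : X *m A = A *m X -> X *m B = B *m X -> X *m (A *m B) = (A *m B) *m X.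
Proof. by move=> a b; rewrite mulmxA a -!mulmxA b. Qed.

Lemma skew_unit A (t : R) : adjmx A = - A -> (I + (t%:C)%C *: A) \in unitmx.
Proof.
move=> sA; rewrite unitmxE unitfE; apply/negP => /det0P [v vnz vM].
pose s := (v *m adjmx v) 0 0.
pose q := (v *m A *m adjmx v) 0 0.
have e : s + (t%:C)%C * q = 0.
  have := congr1 (fun M : 'M[C]_(1, N) => (M *m adjmx v) 0 0) vM.
  rewrite /= mulmxDr mulmx1 -scalemxAr mulmxDl -scalemxAl mul0mx.
  by rewrite [X in _ = X]mxE [X in X = _]mxE [X in _ + X]mxE.
have sJ : conjc s = s.
  rewrite /s !mxE rmorph_sum; apply: eq_bigr => k _.
  by rewrite adjmxE rmorphM /= conjcK mulrC.
have qJ : conjc q = - q.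
  have h : adjmx (v *m A *m adjmx v) = - (v *m A *m adjmx v).
    by rewrite !adjmxM adjmxK sA mulNmx mulmxN mulmxA.
  by rewrite /q -adjmxE h mxE.
have e2 : s - (t%:C)%C * q = 0.
  have -> : s - (t%:C)%C * q = conjc (s + (t%:C)%C * q).
    by rewrite rmorphD rmorphM /= sJ qJ oppr0 mulrN.
  by rewrite e conjc0.
have s0 : s = 0.
  have : (s + (t%:C)%C * q) + (s - (t%:C)%C * q) = 0 by rewrite e e2 addr0.
  rewrite addrACA subrr addr0 -mulr2n -mulr_natl => /eqP.
  by rewrite mulf_eq0 pnatr_eq0 /= => /eqP.
move: vnz; apply/negP; rewrite negbK; apply/eqP/matrixP => i k.
rewrite (ord1 i) mxE.
have : v 0 k * conjc (v 0 k) = 0.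
  have hs : \sum_(j < N) v 0 j * adjmx v j 0 = 0 by move: s0; rewrite /s mxE.
  rewrite -adjmxE; apply: (psumr_eq0P _ hs) => // j _.
  by rewrite adjmxE mulcJ_ge0.
by move/eqP; rewrite mulf_eq0 conjc_eq0 orbb => /eqP.
Qed.

Lemma realCN (t : R) : (((- t)%:C)%C : C) = - (t%:C)%C.
Proof. by apply/eqP; rewrite eq_complex /= oppr0 !eqxx. Qed.

Lemma commIA A c d : (I + c *: A) *m (I + d *: A) = (I + d *: A) *m (I + c *: A).
Proof.
rewrite !mulmxDl !mulmxDr !mul1mx !mulmx1 -!scalemxAl -!scalemxAr !scalerA [c * d]mulrC.
rewrite -!addrA; congr (_ + _); rewrite !addrA; congr (_ + _); exact: addrC.
Qed.

Lemma cayley W : unitary W -> (I + W) \in unitmx ->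
  exists P : R -> 'M[C]_N,
   [/\ P 0 = I, P 1 = W, (forall t, unitary (P t)), mcont P &
       (forall X, X *m W = W *m X -> forall t, X *m P t = P t *m X)].
Proof.
move=> uW uIW.
set B := invmx (I + W); set A := B *m (I - W).
have WV : adjmx W *m W = I by apply: unitaryV.
have cWW : W *m (I + W) = (I + W) *m W by apply: comm_add; [apply: comm_one|].
have cWmW : (I - W) *m (I + W) = (I + W) *m (I - W).
  by apply: comm_add; [apply: comm_one|rewrite mulmxBl mulmxBr mul1mx mulmx1].
have hA1 : (I + W) *m A = I - W by rewrite /A mulmxA mulmxV // mul1mx.
have sA : adjmx A = - A.
  have e1 : adjmx A *m (I + adjmx W) = I - adjmx W.
    by have := congr1 (fun M : 'M[C]_N => adjmx M) hA1; rewrite adjmxM !adjmxD adjmxN adjmx1.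
  have e2 : adjmx A *m (I + W) = W - I.
    have := congr1 (fun M => M *m W) e1.
    rewrite -mulmxA !mulmxDl !mul1mx WV mulNmx WV => e; rewrite -e.
    by rewrite [I + W]addrC.
  have e3 : adjmx A = (W - I) *m B.
    by rewrite -e2 -mulmxA mulmxV // mulmx1.
  rewrite e3 /A (comm_inv uIW cWmW) -mulNmx; congr (_ *m _).
  by rewrite opprB.
set P := fun t : R => (I - (t%:C)%C *: A) *m invmx (I + (t%:C)%C *: A).
have uM : forall t : R, (I + (t%:C)%C *: A) \in unitmx by move=> t; apply: skew_unit.
have Mm : forall t : R, I - (t%:C)%C *: A = I + ((- t)%:C)%C *: A.
  by move=> t; rewrite realCN scaleNr.
have adjM : forall t : R, adjmx (I + (t%:C)%C *: A) = I + ((- t)%:C)%C *: A.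
  by move=> t; rewrite adjmxD adjmx1 adjmxZ sA /= oppr0 realCN scalerN scaleNr.
exists P; split.
- by rewrite /P scale0r subr0 addr0 invmx1 mulmx1.
- rewrite /P scale1r.
  have e : I - A = W *m (I + A).
    have e0 : (I + W) *m (I - A) = (I + W) *m (W *m (I + A)).
      rewrite mulmxA -cWW -mulmxA mulmxDr mulmx1 mulmxN hA1 mulmxDr mulmx1 hA1.
      have -> : I + W - (I - W) = W + W by rewrite opprB addrC addrA subrK.
      have -> : I + W + (I - W) = I + I by rewrite addrC addrACA addNr addr0.
      by rewrite mulmxDr mulmx1.
    by have := congr1 (fun M => B *m M) e0; rewrite /= !mulmxA mulVmx // !mul1mx.
  by rewrite e -mulmxA mulmxV ?mulmx1 //; have := uM 1; rewrite scale1r.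
- move=> t; rewrite /unitary; apply: mulmx1C.
  rewrite /P adjmxM adj_inv // Mm -adjM adjmxK adjM.
  rewrite mulmxA -[invmx _ *m _ *m _]mulmxA commIA mulmxA mulVmx // mul1mx.
  by rewrite mulmxV.
- apply: mcontM.
    apply: mcontD; first exact: mcontC.
    apply: mcontN; apply: mcontZ; last exact: mcontC.
    by apply: ccont_real => x; exact: cvg_id.
  apply: mcont_inv; first by move=> t; rewrite -unitfE -unitmxE.
  apply: mcontD; first exact: mcontC.
  apply: mcontZ; last exact: mcontC.
  by apply: ccont_real => x; exact: cvg_id.
- move=> X hX t.
  have c1 : X *m (I + W) = (I + W) *m X by apply: comm_add => //; apply: comm_one.
  have cB : X *m B = B *m X by rewrite /B (comm_inv uIW c1).
  have c2 : X *m (I - W) = (I - W) *m X.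
    by apply: comm_add; [apply: comm_one|apply: comm_opp].
  have cA : X *m A = A *m X by apply: comm_mul.
  have cM : forall c, X *m (I + c *: A) = (I + c *: A) *m X.
    by move=> c; apply: comm_add; [apply: comm_one|apply: comm_scale].
  apply: comm_mul.
    by rewrite Mm; apply: cM.
  by rewrite (comm_inv (uM t) (cM _)).
Qed.
End Cayley.

Section GoodPhase.
Variable R : realType.
Local Notation C := (R[i]).

Definition xk (k : nat) : C := Complex 1 (k%:R).
Definition lamk (k : nat) : C := xk k / conjc (xk k).

Lemma xk_neq0 k : xk k != 0.
Proof. by apply/eqP => h; have := congr1 (@complex.Re R) h => /= /eqP; rewrite oner_eq0. Qed.

Lemma cxk_neq0 k : conjc (xk k) != 0.
Proof. by rewrite conjc_eq0 xk_neq0. Qed.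

Lemma lamk_norm k : `|lamk k| = 1.
Proof. by rewrite /lamk normrM normfV normcJ mulfV // normr_eq0 xk_neq0. Qed.

Lemma lamk_neq0 k : lamk k != 0.
Proof. by rewrite -normr_eq0 lamk_norm oner_eq0. Qed.

Lemma lamk_inj : injective lamk.
Proof.
move=> k l /eqP; rewrite /lamk eqr_div ?cxk_neq0 // => /eqP h.
have := congr1 (@complex.Im R) h; rewrite !cImM /= !mul1r !mulr1 => e.
have : (k%:R : R) = l%:R by lra.
by move/eqP; rewrite eqr_nat => /eqP.
Qed.

Lemma good_phase N (K : 'M[C]_N) :
  exists l : C, `|l| = 1 /\ (1%:M + l *: K) \in unitmx.
Proof.
apply: contrapT => hn.
have hroot : forall k, root (char_poly K) (- (lamk k)^-1).
  move=> k; rewrite -eigenvalue_root_char; apply/eigenvalueP.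
  have : ~~ ((1%:M + lamk k *: K) \in unitmx).
    by apply/negP => u; apply: hn; exists (lamk k); split => //; exact: lamk_norm.
  rewrite unitmxE unitfE negbK => /det0P [v vnz vM]; exists v => //.
  rewrite mulmxDr mulmx1 -scalemxAr in vM.
  have e : lamk k *: (v *m K) = - v by apply/eqP; rewrite -addr_eq0 addrC vM.
  by rewrite -[v *m K]scale1r -(mulVf (lamk_neq0 k)) -scalerA e scalerN scaleNr.
have := @max_poly_roots _ (char_poly K) (map (fun k => - (lamk k)^-1) (iota 0 N.+1)).
rewrite monic_neq0 ?char_poly_monic // size_map size_iota size_char_poly ltnn.
have -> : all (root (char_poly K)) [seq - (lamk k)^-1 | k <- iota 0 N.+1].
  by apply/allP => z /mapP [k _ ->].
rewrite map_inj_uniq ?iota_uniq //.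
  by move/(_ isT isT isT).
by move=> k l /oppr_inj /invr_inj /lamk_inj.
Qed.
End GoodPhase.

Section PathBack.
Variable R : realType.
Local Notation C := (R[i]).
Variable G : Type.
Variable N : nat.
Hypothesis hN : (0 < N)%N.
Variable rho : G -> 'M[C]_N.
Hypothesis rU : forall g, unitary (rho g).
Local Notation I := (1%:M : 'M[C]_N).

Lemma comm_adj_rho g (X : 'M[C]_N) : rho g *m X = X *m rho g ->
  adjmx (rho g) *m X = X *m adjmx (rho g).
Proof.
move=> e.
have -> : adjmx (rho g) *m X = adjmx (rho g) *m X *m (rho g *m adjmx (rho g)).
  by rewrite rU mulmx1.
by rewrite mulmxA -(mulmxA _ X) -e mulmxA unitaryV // mul1mx.
Qed.

Lemma uval_cont (u : R -> UN R N) : continuous (fun t => Uval (u t) : Mtop R N) ->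
  continuous u.
Proof. by move=> h; apply: (@continuous_comp_initial _ _ _ (@set_val _ _)). Qed.

Lemma path_back (V W : PU R N) : rho_symmetric rho V -> rho_symmetric rho W ->
  chiV rho V = chiV rho W -> sym_path_connected rho V W.
Proof.
move=> sV sW eVW.
set U0 := lift V; set U1 := lift W.
have uU0 := lift_unitary V; have uU1 := lift_unitary W.
set K := U1 *m adjmx U0.
have uK : unitary K.
  apply: unitaryM => //; rewrite /unitary adjmxK; exact: unitaryV.
have cK : forall g, rho g *m K = K *m rho g.
  move=> g; have [h0 n0] := chiV_spec hN rU g sV; have [h1 _] := chiV_spec hN rU g sW.
  rewrite -eVW in h1.
  have h0' : adjmx (rho g) *m adjmx U0 *m rho g = conjc (chiV rho V g) *: adjmx U0.
    have := congr1 (fun M : 'M[C]_N => adjmx M) h0.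
    by rewrite /= !adjmxM adjmxK adjmxZ mulmxA.
  have e : adjmx (rho g) *m K *m rho g = K.
    have -> : adjmx (rho g) *m K *m rho g =
       (adjmx (rho g) *m U1 *m rho g) *m (adjmx (rho g) *m adjmx U0 *m rho g).
      by rewrite /K !mulmxA -(mulmxA _ (rho g)) rU mulmx1.
    rewrite h1 h0' -scalemxAl -scalemxAr scalerA normc1_conj //.
    by rewrite scale1r.
  have := congr1 (fun M => rho g *m M) e.
  by rewrite /= !mulmxA rU mul1mx.
have [l [hl ul]] := good_phase K.
have uW1 : unitary (l *: K) by apply: unitaryZ.
have [P [P0 P1 uP cP comP]] := cayley uW1 ul.
have uPU : forall t, (P t *m U0 : Mtop R N) \in unitary_set (N := N).
  by move=> t; apply: mem_set; apply: unitaryM.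
pose u := fun t => (exist _ (P t *m U0 : Mtop R N) (uPU t) : UN R N).
exists (fun t => \pi_(PU R N) (u t)); split.
- apply: continuous_subspaceT => t.
  apply: (@continuous_comp _ _ _ u (\pi_(PU R N))); last exact: pi_continuous.
  apply: uval_cont => /=; apply: Mtop_cont; apply: mcontM => //; exact: mcontC.
- rewrite -[RHS]reprK; apply: phase_pi; exists 1; rewrite normr1 scale1r; split => //.
  by rewrite (_ : Uval (u 0) = P 0 *m U0) // P0 mul1mx.
- rewrite -[RHS]reprK; apply: phase_pi; exists l; split => //.
  by rewrite (_ : Uval (u 1) = P 1 *m U0) // P1 -scalemxAl /K -mulmxA unitaryV // mulmx1.
- move=> t _ g.
  have [h0 n0] := chiV_spec hN rU g sV.
  have cPg : rho g *m P t = P t *m rho g.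
    by apply: comP; rewrite -scalemxAl -scalemxAr cK.
  have key : adjmx (rho g) *m lift (\pi_(PU R N) (u t)) *m rho g =
      chiV rho V g *: lift (\pi_(PU R N) (u t)).
    apply: lift_eq_scale; rewrite (_ : Uval (u t) = P t *m U0) //.
    have ca := comm_adj_rho cPg.
    have -> : adjmx (rho g) *m (P t *m U0) *m rho g =
        P t *m (adjmx (rho g) *m U0 *m rho g).
      by rewrite !mulmxA ca.
    by rewrite h0 scalemxAr.
  exists (conjc (chiV rho V g)); rewrite normcJ; split => //.
  exact: chiV_sym_conv.
Qed.
End PathBack.

Section PathFwd.
Variable R : realType.
Local Notation C := (R[i]).

Lemma cReMn (x : C) n : complex.Re (x *+ n) = complex.Re x *+ n.
Proof. by elim: n => [|n IH]; rewrite ?mulr0n // !mulrS cReD IH. Qed.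

Lemma cRe_normsq (w : C) : complex.Re (w * conjc w) = complex.Re w ^+ 2 + complex.Im w ^+ 2.
Proof. by case: w => a b /=; rewrite mulrN opprK !expr2. Qed.

Lemma sqsum_neq0 (w : C) : w != 0 -> complex.Re w ^+ 2 + complex.Im w ^+ 2 != 0.
Proof.
case: w => a b /=; apply: contra => /eqP h.
have ha : a = 0.
  apply/eqP; rewrite -sqrf_eq0; apply/eqP/le_anti.
  by rewrite sqr_ge0 -h lerDl sqr_ge0.
have hb : b = 0.
  apply/eqP; rewrite -sqrf_eq0; apply/eqP/le_anti.
  by rewrite sqr_ge0 -h lerDr sqr_ge0.
by rewrite ha hb.
Qed.

Lemma between_frac (a : R) (k : nat) :
  Num.min 0 a <= a / (k.+2)%:R <= Num.max 0 a.
Proof.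
have d0 : 0 < ((k.+2)%:R : R) by rewrite ltr0n.
have d1 : 1 <= ((k.+2)%:R : R) by rewrite ler1n.
set r := ((k.+2)%:R : R)^-1.
have r0 : 0 < r by rewrite invr_gt0.
have r1 : r <= 1 by rewrite invf_le1.
rewrite ge_min le_max.
case: (leP 0 a) => ha.
  by apply/andP; split; apply/orP; [left|right]; nra.
by apply/andP; split; apply/orP; [right|left]; nra.
Qed.

Lemma frac_inj (a : R) : a != 0 -> injective (fun k : nat => a / (k.+2)%:R).
Proof.
by move=> a0 k l /= /(mulfI a0) /invr_inj /eqP; rewrite eqr_nat !eqSS => /eqP.
Qed.

End PathFwd.

Section Fwd.
Variable R : realType.
Local Notation C := (R[i]).
Variable G : Type.
Variable N : nat.
Hypothesis hN : (0 < N)%N.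
Variable rho : G -> 'M[C]_N.
Hypothesis rU : forall g, unitary (rho g).

Lemma Uval_cont : continuous (fun u : UN R N => Uval u : Mtop R N).
Proof. exact: (@initial_continuous _ _ (@set_val _ _)). Qed.

Lemma path_fwd (V W : PU R N) : rho_symmetric rho V -> rho_symmetric rho W ->
  sym_path_connected rho V W -> chiV rho V = chiV rho W.
Proof.
move=> sV sW [gam [cg g0 g1 sg]]; apply: funext => g.
set c0 := chiV rho V g.
pose E (u : UN R N) : 'M[C]_N := adjmx (rho g) *m Uval u *m rho g - c0 *: Uval u.
pose h' (u : UN R N) : R := complex.Re (\tr (E u *m adjmx (E u))).
have ch' : continuous h'.
  have cU : mcont (fun u : UN R N => Uval u) by apply: Mtop_cont_inv; exact: Uval_cont.
  have cE : mcont E.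
    apply: mcontD; last by apply: mcontN; apply: mcontZ; [apply: ccontC|].
    by apply: mcontM; [apply: mcontM; [apply: mcontC|]|apply: mcontC].
  have := ccont_tr (mcontM cE (mcont_adj cE)).
  by case.
have inv : {homo h' : a b / \pi_(PU R N) a == \pi_(PU R N) b >-> a == b}.
  move=> a b /eqP /pi_phase [c [hc e]]; apply/eqP.
  have Ee : E a = c *: E b.
    by rewrite /E e -scalemxAr -scalemxAl scalerBr !scalerA [c0 * c]mulrC.
  rewrite /h' Ee adjmxZ -scalemxAl -scalemxAr.
  by rewrite scalerA normc1_conj // scale1r.
have ch : continuous (h' \o generic_quotient.repr : PU R N -> R) by apply: repr_comp_continuous.
pose F t := h' (generic_quotient.repr (gam t)).
have cF : {within `[0, 1], continuous F}.
  move=> t; apply: (@continuous_comp (subspace `[(0:R), 1]) _ _ gam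
     (h' \o generic_quotient.repr) t); [apply: cg|apply: ch].
pose q (z : C) := (complex.Re (z - c0) ^+ 2 + complex.Im (z - c0) ^+ 2) *+ N.
have Fq : forall t, t \in `[0, 1]%R -> F t = q (chiV rho (gam t) g).
  move=> t ht; rewrite /F /h' /E.
  have [h0 _] := chiV_spec hN rU g (sg t ht).
  rewrite -/(lift (gam t)) h0 -scalerBl adjmxZ -scalemxAl -scalemxAr scalerA.
  rewrite (lift_unitary (gam t)) mxtraceZ mxtrace1 mulr_natr cReMn cRe_normsq //.
have F0 : F 0 = 0.
  rewrite Fq; last by rewrite in_itv /= lexx ler01.
  by rewrite g0 -/c0 /q subrr /= expr2 mulr0 addr0 mul0rn.
have F1 : F 1 = q (chiV rho W g).
  by rewrite Fq ?g1 // in_itv /= ler01 lexx.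
apply: contrapT => hne.
have a0 : F 1 != 0.
  rewrite F1 /q mulrn_eq0 negb_or -lt0n hN /=; apply: sqsum_neq0.
  by rewrite subr_eq0; apply/eqP => e; apply: hne; rewrite e.
have H : forall k : 'I_N.+1, exists z : C, z ^+ N = 1 /\ q z = F 1 / (k.+2)%:R.
  move=> k.
  have [t ht Ft] := @IVT R F 0 1 (F 1 / (k.+2)%:R) ler01 cF
    ltac:(rewrite F0; exact: between_frac).
  exists (chiV rho (gam t) g); split.
    exact: (chiV_order hN rU (sg t ht) g).
  by rewrite -Fq.
have [zf hzf] := choice H.
have p0 : ('X^N - 1 : {poly C}) != 0 by rewrite -size_poly_eq0 size_XnsubC.
have := @max_poly_roots _ ('X^N - 1) (map zf (enum 'I_N.+1)) p0.
rewrite size_map size_enum_ord size_XnsubC // ltnn.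
have -> : all (root ('X^N - 1)) (map zf (enum 'I_N.+1)).
  apply/allP => z /mapP [k _ ->].
  by rewrite rootE !hornerE (hzf k).1 subrr.
rewrite map_inj_uniq ?enum_uniq //.
  by move/(_ isT isT).
move=> k l e; apply: val_inj; apply: (frac_inj a0).
by rewrite /= -(hzf k).2 -(hzf l).2 e.
Qed.
End Fwd.


Theorem mainTheorem8 (R : realType) (G : topologicalType)
    (mul : G -> G -> G) (inv : G -> G) (one : G) :
  topological_group mul inv one ->
  (* (i) chi[V] is a well-defined element of X_G, independent of the lift *)
  (forall (N : nat) (rho : G -> 'M[R[i]]_N), (0 < N)%N -> unitary_rep mul rho ->
    forall V : PU R N, rho_symmetric rho V ->
      in_XG mul (chiV rho V) /\
      (forall W : UN R N, \pi_(PU R N) W = V ->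
         forall g, adjmx (rho g) *m Uval W *m rho g = chiV rho V g *: Uval W))
  /\
  (* (ii) path components of the rho-symmetric projective unitaries
          <-> attained values of chi[V] *)
  (forall (N : nat) (rho : G -> 'M[R[i]]_N), (0 < N)%N -> unitary_rep mul rho ->
    forall V W : PU R N, rho_symmetric rho V -> rho_symmetric rho W ->
      (sym_path_connected rho V W <-> chiV rho V = chiV rho W))
  /\
  (* (iii) every attained value has finite order *)
  (forall (N : nat) (rho : G -> 'M[R[i]]_N), (0 < N)%N -> unitary_rep mul rho ->
    forall V : PU R N, rho_symmetric rho V ->
      exists n : nat, (0 < n)%N /\ forall g, chiV rho V g ^+ n = 1)
  /\
  (* (iv) every element of X_G^T is attained, for rho = (+)_{p<n} chi^p *)
  (forall (chi : G -> R[i]) (n : nat), in_XG mul chi -> has_order chi n ->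
    unitary_rep mul (sum_powers_rep chi n) /\
    exists V : PU R n, rho_symmetric (sum_powers_rep chi n) V /\
                       chiV (sum_powers_rep chi n) V = chi)
  /\
  (* (v) multiplicativity under tensor products *)
  (forall (N N' : nat) (rho : G -> 'M[R[i]]_N) (rho' : G -> 'M[R[i]]_N'),
    (0 < N)%N -> (0 < N')%N -> unitary_rep mul rho -> unitary_rep mul rho' ->
    forall (V : PU R N) (Q : PU R N'),
      rho_symmetric rho V -> rho_symmetric rho' Q ->
      rho_symmetric (tens_rep rho rho') (tensPU V Q) /\
      chiV (tens_rep rho rho') (tensPU V Q) = (fun g => chiV rho V g * chiV rho' Q g))
  /\
  (* (vi) stability under V |-> V (x) 1 *)
  (forall (N N' : nat) (rho : G -> 'M[R[i]]_N) (rho' : G -> 'M[R[i]]_N'),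
    (0 < N)%N -> (0 < N')%N -> unitary_rep mul rho -> unitary_rep mul rho' ->
    forall V : PU R N, rho_symmetric rho V ->
      rho_symmetric (tens_rep rho rho') (tensPU V (onePU R N')) /\
      chiV (tens_rep rho rho') (tensPU V (onePU R N')) = chiV rho V).
Proof.
move=> _; split; [|split; [|split; [|split; [|split]]]].
- by move=> N rho hN rep V sV; apply: part_i.
- move=> N rho hN [rU rM rC] V W sV sW; split.
    exact: path_fwd.
  exact: path_back.
- move=> N rho hN [rU _ _] V sV; exists N; split => //; exact: chiV_order.
- exact: part_iv.
- exact: part_v.
- exact: part_vi.
Qed.
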